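(* Let $(G,\tau)$ be a profinite group and $M$ a finite continuous $G$-module, and let $\varphi^2:H^2_{\mathrm{con}}(G,M)\to H^2_{\mathrm{abs}}(G,M)$ be the natural map. Then: (1) $\varphi^2$ is surjective if and only if for every abstract group extension $1\to M\to H\to G\to 1$ (inducing the given action of $G$ on $M$), $H$ admits a profinite group topology whose quotient topology on $G$ is $\tau$. (2) $\varphi^2$ is injective if and only if for every profinite extension $H$ of $G$ by $M$, and every pair of profinite group topologies $T_1,T_2$ on $H$ for which the quotient maps $(H,T_i)\to(G,\tau)$ are continuous, there exists a continuous isomorphism $(H,T_1)\to(H,T_2)$ compatible with the inclusion of $M$ and the quotient map to $G$.
   Context: $H^2_{\mathrm{con}}$ denotes continuous cohomology of the profinite group and $H^2_{\mathrm{abs}}$ the cohomology of the underlying abstract group; $\varphi^2$ is the natural comparison map. *)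

(* Defs.v *)
(* for the finite module M (finZmodType); groups and
   topologies on arbitrary carriers are given by honest elementary
   definitions below, since topologies on the same group H must vary. *)
From HB Require Import structures.
From mathcomp Require Import all_boot all_algebra.
From Stdlib Require Import List.

Set Implicit Arguments.
Unset Strict Implicit.
Unset Printing Implicit Defensive.

Import GRing.Theory.
Local Open Scope ring_scope.

Record group_on (T : Type) := GroupOn {
  gmul : T -> T -> T;
  ginv : T -> T;
  gone : T;
  gmulA : forall x y z, gmul x (gmul y z) = gmul (gmul x y) z;
  gmul1 : forall x, gmul gone x = x;
  gmulV : forall x, gmul (ginv x) x = gone
}.

Definition group_hom (A B : Type) (gA : group_on A) (gB : group_on B)
  (f : A -> B) : Prop :=
  forall x y, f (gmul gA x y) = gmul gB (f x) (f y).

Definition topology (T : Type) := (T -> Prop) -> Prop.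

Definition is_topology (T : Type) (op : topology T) : Prop :=
  op (fun _ => True) /\
  (forall (I : Type) (U : I -> T -> Prop),
      (forall i, op (U i)) -> op (fun x => exists i, U i x)) /\
  (forall U V, op U -> op V -> op (fun x => U x /\ V x)).

Definition continuous_top (A B : Type) (oA : topology A) (oB : topology B)
  (f : A -> B) : Prop :=
  forall V, oB V -> oA (fun x => V (f x)).

Definition prod_top (A B : Type) (oA : topology A) (oB : topology B)
  : topology (A * B) :=
  fun W => forall p, W p -> exists U V, oA U /\ oB V /\ U p.1 /\ V p.2 /\
                       (forall a b, U a -> V b -> W (a, b)).

Definition compact_top (T : Type) (op : topology T) : Prop :=
  forall (I : Type) (U : I -> T -> Prop),
    (forall i, op (U i)) -> (forall x, exists i, U i x) ->
    exists s : list I, forall x, exists i, In i s /\ U i x.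

Definition hausdorff_top (T : Type) (op : topology T) : Prop :=
  forall x y, x <> y -> exists U V, op U /\ op V /\ U x /\ V y /\
                                 (forall z, U z -> V z -> False).

Definition connected_in (T : Type) (op : topology T) (S : T -> Prop) : Prop :=
  ~ (exists U V, op U /\ op V /\
       (forall x, S x -> U x \/ V x) /\
       (exists x, S x /\ U x) /\ (exists x, S x /\ V x) /\
       (forall x, S x -> U x -> V x -> False)).

Definition totally_disconnected_top (T : Type) (op : topology T) : Prop :=
  forall S, connected_in op S -> forall x y, S x -> S y -> x = y.

Definition group_topology (T : Type) (gT : group_on T) (op : topology T) : Prop :=
  is_topology op /\
  continuous_top (prod_top op op) op (fun p => gmul gT p.1 p.2) /\
  continuous_top op op (ginv gT).

Definition profinite_topology (T : Type) (gT : group_on T) (op : topology T) : Prop :=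
  group_topology gT op /\ compact_top op /\ hausdorff_top op /\
  totally_disconnected_top op.

Definition quotient_top (H G : Type) (oH : topology H) (p : H -> G) : topology G :=
  fun U => oH (fun h => U (p h)).

Definition is_G_module (G : Type) (gG : group_on G) (M : finZmodType)
  (act : G -> M -> M) : Prop :=
  (forall m, act (gone gG) m = m) /\
  (forall g h m, act (gmul gG g h) m = act g (act h m)) /\
  (forall g m n, act g (m + n) = act g m + act g n).

(* continuity of G x M -> M with M discrete (M finite):
   every preimage of a point is open; for the discrete topology on M this is
   exactly: for all m, m', {g | g.m = m'} is open in G. *)
Definition continuous_action (G : Type) (tau : topology G) (M : finZmodType)
  (act : G -> M -> M) : Prop :=
  forall m m' : M, tau (fun g => act g m = m').

Definition continuous_1cochain (G : Type) (tau : topology G) (M : finZmodType)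
  (c : G -> M) : Prop :=
  forall m : M, tau (fun g => c g = m).

Definition continuous_2cochain (G : Type) (tau : topology G) (M : finZmodType)
  (f : G -> G -> M) : Prop :=
  forall m : M, prod_top tau tau (fun p => f p.1 p.2 = m).

Definition is_2cocycle (G : Type) (gG : group_on G) (M : finZmodType)
  (act : G -> M -> M) (f : G -> G -> M) : Prop :=
  forall g h k, act g (f h k) - f (gmul gG g h) k + f g (gmul gG h k) - f g h = 0.

Definition coboundary1 (G : Type) (gG : group_on G) (M : finZmodType)
  (act : G -> M -> M) (c : G -> M) : G -> G -> M :=
  fun g h => act g (c h) - c (gmul gG g h) + c g.

Definition is_abs_2coboundary (G : Type) (gG : group_on G) (M : finZmodType)
  (act : G -> M -> M) (f : G -> G -> M) : Prop :=
  exists c : G -> M, forall g h, f g h = coboundary1 gG act c g h.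

Definition is_con_2coboundary (G : Type) (gG : group_on G) (tau : topology G)
  (M : finZmodType) (act : G -> M -> M) (f : G -> G -> M) : Prop :=
  exists c : G -> M, continuous_1cochain tau c /\
                     forall g h, f g h = coboundary1 gG act c g h.

(* phi^2 : H^2_con = Z^2_con/B^2_con -> H^2_abs = Z^2_abs/B^2_abs,
   [f]_con |-> [f]_abs. *)
Definition phi2_surjective (G : Type) (gG : group_on G) (tau : topology G)
  (M : finZmodType) (act : G -> M -> M) : Prop :=
  forall f : G -> G -> M, is_2cocycle gG act f ->
    exists f' : G -> G -> M, continuous_2cochain tau f' /\ is_2cocycle gG act f' /\
      is_abs_2coboundary gG act (fun g h => f g h - f' g h).

Definition phi2_injective (G : Type) (gG : group_on G) (tau : topology G)
  (M : finZmodType) (act : G -> M -> M) : Prop :=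
  forall f1 f2 : G -> G -> M,
    continuous_2cochain tau f1 -> is_2cocycle gG act f1 ->
    continuous_2cochain tau f2 -> is_2cocycle gG act f2 ->
    is_abs_2coboundary gG act (fun g h => f1 g h - f2 g h) ->
    is_con_2coboundary gG tau act (fun g h => f1 g h - f2 g h).

Definition is_extension (G : Type) (gG : group_on G) (M : finZmodType)
  (act : G -> M -> M) (H : Type) (gH : group_on H)
  (i : M -> H) (p : H -> G) : Prop :=
  (forall m n, i (m + n) = gmul gH (i m) (i n)) /\
  injective i /\
  group_hom gH gG p /\
  (forall g, exists h, p h = g) /\
  (forall h, p h = gone gG <-> exists m, h = i m) /\
  (forall h m, gmul gH (gmul gH h (i m)) (ginv gH h) = i (act (p h) m)).

(* Main.v *)
Require Import Defs.
From mathcomp Require Import all_boot all_algebra.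
From Stdlib Require Import Classical FunctionalExtensionality PropExtensionality ClassicalEpsilon.

Set Implicit Arguments.
Unset Strict Implicit.
Unset Printing Implicit Defensive.

Lemma pred_ext (T : Type) (U V : T -> Prop) : (forall x, U x <-> V x) -> U = V.
Proof.
move=> h; apply: functional_extensionality => x; apply: propositional_extensionality; exact: h.
Qed.

Fixpoint somes (I : Type) (l : list (option I)) : list I :=
  match l with nil => nil | cons None l' => somes l' | cons (Some i) l' => cons i (somes l') end.

Lemma somes_in (I : Type) (l : list (option I)) i : List.In (Some i) l -> List.In i (somes l).
Proof.
elim: l => [|[j|] l IH] //= [E|H].
- by case: E => ->; left.
- by right; apply: IH.
- by [].
- by apply: IH.
Qed.

Section Topo.
Variables (T : Type) (op : topology T).
Hypothesis Hop : is_topology op.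

Lemma op_ext (U V : T -> Prop) : (forall x, U x <-> V x) -> op U -> op V.
Proof. by move=> /pred_ext ->. Qed.

Lemma op_T : op (fun _ => True).
Proof. by case: Hop. Qed.

Lemma op_union (I : Type) (U : I -> T -> Prop) :
  (forall i, op (U i)) -> op (fun x => exists i, U i x).
Proof. by case: Hop => _ [h _]; apply: h. Qed.

Lemma op_and (U V : T -> Prop) : op U -> op V -> op (fun x => U x /\ V x).
Proof. by case: Hop => _ [_ h]; apply: h. Qed.

Lemma op_empty : op (fun _ => False).
Proof.
apply: (op_ext (U := fun x => exists i : False, (fun _ _ => False) i x)).
  by move=> x; split => [[]|].
by apply: op_union => -[].
Qed.

Lemma op_local (W : T -> Prop) :
  (forall x, W x -> exists U, op U /\ U x /\ forall y, U y -> W y) -> op W.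
Proof.
move=> h.
pose I := {U : T -> Prop | op U /\ forall y, U y -> W y}.
apply: (op_ext (U := fun x => exists i : I, (proj1_sig i) x)).
  move=> x; split => [[[U [oU sU]] /= Ux]|Wx]; first exact: sU.
  have [U [oU [Ux sU]]] := h x Wx.
  by exists (exist _ U (conj oU sU)).
by apply: op_union => -[U [oU ?]].
Qed.

Lemma op_inter_list (A : Type) (U : A -> T -> Prop) (s : list A) :
  (forall a, List.In a s -> op (U a)) -> op (fun x => forall a, List.In a s -> U a x).
Proof.
elim: s => [|a s IH] hs.
  by apply: (op_ext (U := fun _ => True)) => [x|]; [split|exact: op_T].
apply: (op_ext (U := fun x => U a x /\ (forall b, List.In b s -> U b x))).
  move=> x; split.
    by move=> [h1 h2] b /= [E|hb]; [rewrite -E|apply: h2].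
  by move=> h; split; [apply: h; left|move=> b hb; apply: h; right].
apply: op_and; first by apply: hs; left.
by apply: IH => b hb; apply: hs; right.
Qed.

Lemma op_union_list (A : Type) (U : A -> T -> Prop) (s : list A) :
  (forall a, op (U a)) -> op (fun x => exists a, List.In a s /\ U a x).
Proof.
move=> hs.
apply: (op_ext (U := fun x => exists i : {a | List.In a s}, U (proj1_sig i) x)).
  move=> x; split => [[[a ha] /= h]|[a [ha h]]]; first by exists a.
  by exists (exist _ a ha).
by apply: op_union => -[a ha].
Qed.

Definition compact_set (K : T -> Prop) :=
  forall (I : Type) (U : I -> T -> Prop),
    (forall i, op (U i)) -> (forall x, K x -> exists i, U i x) ->
    exists s : list I, forall x, K x -> exists i, List.In i s /\ U i x.

Lemma compact_closed (F : T -> Prop) :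
  compact_top op -> op (fun x => ~ F x) -> compact_set F.
Proof.
move=> cT oF I U oU cov.
pose U' (o : option I) := match o with Some i => U i | None => fun x => ~ F x end.
have [l hl] : exists l : list (option I), forall x, exists o, List.In o l /\ U' o x.
  apply: cT.
    by move=> [i|] /=; [apply: oU|].
  move=> x /=.
  case: (classic (F x)) => [/cov [i hi]|nF]; first by exists (Some i).
  by exists None.
exists (somes l) => x Fx.
have [[i|] [hi Ui]] := hl x => //.
by exists i; split => //; apply: somes_in.
Qed.

Lemma hausdorff_sep_pt (K : T -> Prop) x :
  hausdorff_top op -> compact_set K -> ~ K x ->
  exists U V, op U /\ op V /\ U x /\ (forall y, K y -> V y) /\
    (forall z, U z -> V z -> False).
Proof.
move=> hT cK nKx.
pose I := {UV : (T -> Prop) * (T -> Prop) |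
   op UV.1 /\ op UV.2 /\ UV.1 x /\ forall z, UV.1 z -> UV.2 z -> False}.
have [l hl] : exists l : list I, forall y, K y -> exists i, List.In i l /\ (proj1_sig i).2 y.
  apply: cK => [[UV [? [? ?]]] //|y Ky].
  have nxy : x <> y by move=> E; apply: nKx; rewrite E.
  have [U [V [oU [oV [Ux [Vy d]]]]]] := hT x y nxy.
  by exists (exist _ (U, V) (conj oU (conj oV (conj Ux d)))).
exists (fun z => forall i, List.In i l -> (proj1_sig i).1 z).
exists (fun z => exists i, List.In i l /\ (proj1_sig i).2 z).
split; first by apply: op_inter_list => -[UV [? [? ?]]].
split; first by apply: op_union_list => -[UV [? [? ?]]].
split; first by move=> [UV [? [? [? ?]]]].
split; first exact: hl.
move=> z hU [[UV [? [? [? d]]]] [hi h2]].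
by apply: (d z) => //; apply: (hU _ hi).
Qed.

Lemma compact_hausdorff_closed (K : T -> Prop) :
  hausdorff_top op -> compact_set K -> op (fun x => ~ K x).
Proof.
move=> hT cK; apply: op_local => x nKx.
have [U [V [oU [oV [Ux [KV d]]]]]] := hausdorff_sep_pt hT cK nKx.
exists U; split=> //; split=> // y Uy Ky.
by apply: (d y) => //; apply: KV.
Qed.

Lemma hausdorff_sep_sets (A B : T -> Prop) :
  hausdorff_top op -> compact_set A -> compact_set B ->
  (forall x, A x -> B x -> False) ->
  exists OA OB, op OA /\ op OB /\ (forall x, A x -> OA x) /\ (forall x, B x -> OB x) /\
    (forall z, OA z -> OB z -> False).
Proof.
move=> hT cA cB dAB.
pose I := {UV : (T -> Prop) * (T -> Prop) |
   op UV.1 /\ op UV.2 /\ (forall y, B y -> UV.2 y) /\ forall z, UV.1 z -> UV.2 z -> False}.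
have [l hl] : exists l : list I, forall y, A y -> exists i, List.In i l /\ (proj1_sig i).1 y.
  apply: cA => [[UV [? [? ?]]] //|y Ay].
  have nBy : ~ B y by move=> By; apply: (dAB y).
  have [U [V [oU [oV [Ux [BV d]]]]]] := hausdorff_sep_pt hT cB nBy.
  by exists (exist _ (U, V) (conj oU (conj oV (conj BV d)))).
exists (fun z => exists i, List.In i l /\ (proj1_sig i).1 z).
exists (fun z => forall i, List.In i l -> (proj1_sig i).2 z).
split; first by apply: op_union_list => -[UV [? [? ?]]].
split; first by apply: op_inter_list => -[UV [? [? ?]]].
split; first exact: hl.
split; first by move=> y By [UV [? [? [h ?]]]] _; apply: h.
move=> z [[UV [? [? [? d]]]] [hi h1]] hB.
by apply: (d z) => //; apply: (hB _ hi).
Qed.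

Definition clopen (C : T -> Prop) := op C /\ op (fun x => ~ C x).

End Topo.

Section Topo2.
Variables (T : Type) (op : topology T).
Hypothesis Hop : is_topology op.

Lemma op_or (U V : T -> Prop) : op U -> op V -> op (fun x => U x \/ V x).
Proof.
move=> oU oV.
apply: (op_ext (U := fun x => exists b : bool, (if b then U else V) x)) => //.
  by move=> x; split => [[[]]|[h|h]]; [left|right|exists true|exists false].
by apply: (op_union Hop) => -[].
Qed.

Lemma op_not_not (U : T -> Prop) : op U -> op (fun x => ~ ~ U x).
Proof. by apply: op_ext => // x; split => [h|h]; [move=> /(_ h)|apply: NNPP]. Qed.

Lemma clopen_inter_list x (l : list {C : T -> Prop | clopen op C /\ C x}) :
  clopen op (fun y => forall i, List.In i l -> proj1_sig i y) /\
  (forall i, List.In i l -> proj1_sig i x).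
Proof.
split; last by move=> [C [cC Cx]] _.
split; first by apply: (op_inter_list Hop) => // -[C [[oC ?] ?]].
apply: (op_ext (U := fun y => exists i, List.In i l /\ ~ proj1_sig i y)) => //.
  move=> y; split => [[i [hi ni]] h|h]; first by apply: ni; apply: h.
  by apply: NNPP => nh; apply: h => i hi; apply: NNPP => ni; apply: nh; exists i.
by apply: (op_union_list Hop) => // -[C [[? oC] ?]].
Qed.

Lemma clopen_avoid x (R : T -> Prop) :
  compact_top op -> op (fun y => ~ R y) ->
  (forall y, R y -> exists C, clopen op C /\ C x /\ ~ C y) ->
  exists C, clopen op C /\ C x /\ forall y, C y -> ~ R y.
Proof.
move=> cT oR h.
have cR := compact_closed cT oR.
pose I := {C : T -> Prop | clopen op C /\ C x}.
have [l hl] : exists l : list I, forall y, R y -> exists i, List.In i l /\ ~ proj1_sig i y.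
  apply: cR => [[C [[? oC] ?]] //|y Ry].
  have [C [cC [Cx nCy]]] := h y Ry.
  by exists (exist _ C (conj cC Cx)).
have [cl hx] := clopen_inter_list l.
exists (fun y => forall i, List.In i l -> proj1_sig i y); split => //; split => //.
move=> y hy Ry; have [i [hi ni]] := hl y Ry.
by apply: ni; apply: hy.
Qed.

Lemma clopen_nbhd (V : T -> Prop) x :
  compact_top op -> hausdorff_top op -> totally_disconnected_top op ->
  op V -> V x -> exists C, clopen op C /\ C x /\ forall y, C y -> V y.
Proof.
move=> cT hT tT oV Vx.
pose Q y := forall C, clopen op C -> C x -> C y.
have Qx : Q x by [].
have oQ : op (fun y => ~ Q y).
  apply: (op_ext (U := fun y => exists i : {C : T -> Prop | clopen op C /\ C x}, ~ proj1_sig i y)) => //.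
    move=> y; split => [[[C [cC Cx]] /= nC] hQ|nQ]; first by apply: nC; apply: hQ.
    apply: NNPP => h; apply: nQ => C cC Cx; apply: NNPP => nC; apply: h.
    by exists (exist _ C (conj cC Cx)).
  by apply: (op_union Hop) => -[C [[? oC] ?]].
have conQ : connected_in op Q.
  move=> [U1 [U2 [o1 [o2 [cov [[a [Qa U1a]] [[b [Qb U2b]] disj]]]]]]].
  pose A y := Q y /\ ~ U2 y.
  pose B y := Q y /\ ~ U1 y.
  have oA : op (fun y => ~ A y).
    apply: (op_ext (U := fun y => ~ Q y \/ U2 y)) => //; last exact: op_or.
    move=> y; rewrite /A; split => [[h|h] [h1 h2]|h]; [exact: h h1|exact: h2 h|].
    by case: (classic (Q y)) => [Qy|]; [right; apply: NNPP => nU; apply: h|left].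
  have oB : op (fun y => ~ B y).
    apply: (op_ext (U := fun y => ~ Q y \/ U1 y)) => //; last exact: op_or.
    move=> y; rewrite /B; split => [[h|h] [h1 h2]|h]; [exact: h h1|exact: h2 h|].
    by case: (classic (Q y)) => [Qy|]; [right; apply: NNPP => nU; apply: h|left].
  have dAB : forall y, A y -> B y -> False.
    by move=> y [Qy n2] [_ n1]; case: (cov y Qy).
  have [OA [OB [oOA [oOB [AOA [BOB dO]]]]]] :=
    hausdorff_sep_sets Hop hT (compact_closed cT oA) (compact_closed cT oB) dAB.
  have QO : forall y, Q y -> OA y \/ OB y.
    move=> y Qy; case: (cov y Qy) => hU.
      left; apply: AOA; split=> // h2; exact: (disj y).
    right; apply: BOB; split=> // h1; exact: (disj y).
  have [Cs [cCs [Csx CsR]]] : exists C, clopen op C /\ C x /\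
      forall y, C y -> ~ ~ (OA y \/ OB y).
    apply: clopen_avoid => //.
      by apply: op_not_not; apply: op_or.
    move=> y nO; apply: NNPP => nC; apply: nO; apply: QO => C cC Cx.
    by apply: NNPP => nCy; apply: nC; exists C.
  have key : forall O1 O2 : T -> Prop, op O1 -> op O2 ->
      (forall y, Cs y -> O1 y \/ O2 y) -> (forall z, O1 z -> O2 z -> False) ->
      O1 x -> (exists y, Q y /\ O2 y) -> False.
    move=> O1 O2 oO1 oO2 cov2 d2 O1x [y [Qy O2y]].
    have cD : clopen op (fun y => Cs y /\ O1 y).
      split; first by apply: (op_and Hop) => //; case: cCs.
      apply: (op_ext (U := fun y => ~ Cs y \/ O2 y)) => //; last first.
        by apply: op_or => //; case: cCs.
      move=> z; split => [[h|h] [h1 h2]|h]; [exact: h h1|exact: (d2 z)|].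
      case: (classic (Cs z)) => Cz; last by left.
      by right; case: (cov2 z Cz) => // h1; case: h.
    have := Qy _ cD (conj Csx O1x) => -[_ O1y].
    exact: (d2 y).
  have covCs : forall y, Cs y -> OA y \/ OB y by move=> y /CsR /NNPP.
  case: (cov x Qx) => hx.
    have Ax : A x by split=> // h2; exact: (disj x).
    apply: (key OA OB) => //; first exact: AOA.
    exists b; split=> //; apply: BOB; split=> // h1; exact: (disj b).
  have Bx : B x by split=> // h1; exact: (disj x).
  apply: (key OB OA) => //.
  - by move=> y /covCs [];[right|left].
  - by move=> z h1 h2; apply: (dO z).
  - exact: BOB.
  - exists a; split=> //; apply: AOA; split=> // h2; exact: (disj a).
have Qeq : forall y, Q y -> y = x by move=> y Qy; apply: (tT Q conQ).
have [C [cC [Cx CV]]] : exists C, clopen op C /\ C x /\ forall y, C y -> ~ ~ V y.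
  apply: clopen_avoid => //; first exact: op_not_not.
  move=> y nVy; apply: NNPP => h.
  have : Q y.
    move=> C cC Cx; apply: NNPP => nC; apply: h; by exists C.
  by move/Qeq => E; apply: nVy; rewrite E.
by exists C; split=> //; split=> // y /CV /NNPP.
Qed.

End Topo2.

Lemma connected_image (A B : Type) (oA : topology A) (oB : topology B) (f : A -> B) S :
  continuous_top oA oB f -> connected_in oA S ->
  connected_in oB (fun y => exists x, S x /\ f x = y).
Proof.
move=> cf cS [U [V [oU [oV [cov [[a [[x [Sx E1]] Ua]] [[b [[y [Sy E2]] Vb]] d]]]]]]].
apply: cS; exists (fun z => U (f z)), (fun z => V (f z)).
split; first exact: cf.
split; first exact: cf.
split; first by move=> z Sz; apply: cov; exists z.
split; first by exists x; rewrite E1.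
split; first by exists y; rewrite E2.
by move=> z Sz; apply: d; exists z.
Qed.


Set Implicit Arguments.
Unset Strict Implicit.
Unset Printing Implicit Defensive.

Section GL.
Variables (T : Type) (g : group_on T).
Local Notation "x ** y" := (gmul g x y) (at level 40, left associativity).
Local Notation "1" := (gone g).
Local Notation inv := (ginv g).

Lemma GmulKg a x : inv a ** (a ** x) = x.
Proof. by rewrite gmulA gmulV gmul1. Qed.

Lemma Gidem_one y : y ** y = y -> y = 1.
Proof. by move=> h; rewrite -(GmulKg y y) h gmulV. Qed.

Lemma GmulgVr x : x ** inv x = 1.
Proof.
apply: Gidem_one.
by rewrite -gmulA (gmulA g (inv x)) gmulV gmul1.
Qed.

Lemma Gmulg1r x : x ** 1 = x.
Proof. by rewrite -(gmulV g x) gmulA GmulgVr gmul1. Qed.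

Lemma GmulKVg a x : a ** (inv a ** x) = x.
Proof. by rewrite gmulA GmulgVr gmul1. Qed.

Lemma GmulgK a x : x ** a ** inv a = x.
Proof. by rewrite -gmulA GmulgVr Gmulg1r. Qed.

Lemma GmulgKV a x : x ** inv a ** a = x.
Proof. by rewrite -gmulA gmulV Gmulg1r. Qed.

Lemma Gmulg_cancel_l a x y : a ** x = a ** y -> x = y.
Proof. by move=> h; rewrite -(GmulKg a x) h GmulKg. Qed.

Lemma Gmulg_cancel_r a x y : x ** a = y ** a -> x = y.
Proof. by move=> h; rewrite -(GmulgK a x) h GmulgK. Qed.

Lemma Ginv_unique x y : x ** y = 1 -> y = inv x.
Proof. by move=> h; apply: (Gmulg_cancel_l (a := x)); rewrite h GmulgVr. Qed.

Lemma GinvgK x : inv (inv x) = x.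
Proof. by apply/esym/Ginv_unique; rewrite gmulV. Qed.

Lemma Ginvg_mul x y : inv (x ** y) = inv y ** inv x.
Proof.
apply/esym/Ginv_unique.
by rewrite -gmulA (gmulA g y) GmulgVr gmul1 GmulgVr.
Qed.

Lemma Ginvg1 : inv 1 = 1.
Proof. by apply/esym/Ginv_unique; rewrite gmul1. Qed.

End GL.

Lemma cont_comp (A B C : Type) (oA : topology A) (oB : topology B) (oC : topology C)
  (f : A -> B) (h : B -> C) :
  continuous_top oA oB f -> continuous_top oB oC h -> continuous_top oA oC (fun x => h (f x)).
Proof. by move=> cf ch V oV; exact: (cf (fun y => V (h y)) (ch V oV)). Qed.

Lemma cont_id (A : Type) (oA : topology A) : continuous_top oA oA (fun x => x).
Proof. by move=> V. Qed.

Lemma cont_const (A B : Type) (oA : topology A) (oB : topology B) (b : B) :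
  is_topology oA -> continuous_top oA oB (fun _ => b).
Proof.
move=> hA V oV; case: (classic (V b)) => Vb.
  by apply: (@op_ext A oA (fun _ => True) (fun _ => V b)) => //; exact: op_T.
by apply: (@op_ext A oA (fun _ => False) (fun _ => V b)) => //; exact: op_empty.
Qed.

Lemma cont_pair (X A B : Type) (oX : topology X) (oA : topology A) (oB : topology B)
  (f1 : X -> A) (f2 : X -> B) : is_topology oX ->
  continuous_top oX oA f1 -> continuous_top oX oB f2 ->
  continuous_top oX (prod_top oA oB) (fun x => (f1 x, f2 x)).
Proof.
move=> hX c1 c2 W oW; apply: (op_local hX) => x Wx.
have [U [V [oU [oV [Ux [Vx h]]]]]] := oW _ Wx.
exists (fun y => U (f1 y) /\ V (f2 y)); split.
  by apply: (op_and hX); [apply: c1|apply: c2].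
by split=> // y [Uy Vy]; apply: (h _ _ Uy Vy).
Qed.

Lemma cont_fst (A B : Type) (oA : topology A) (oB : topology B) :
  is_topology oB -> continuous_top (prod_top oA oB) oA fst.
Proof.
move=> hB V oV q Vq; exists V, (fun _ => True).
by split=> //; split; [exact: op_T|split=> //; split].
Qed.

Lemma cont_snd (A B : Type) (oA : topology A) (oB : topology B) :
  is_topology oA -> continuous_top (prod_top oA oB) oB snd.
Proof.
move=> hA V oV q Vq; exists (fun _ => True), V.
by split; [exact: op_T|split=> //; split].
Qed.

Section GTop.
Variables (T : Type) (gT : group_on T) (op : topology T).
Hypothesis Hg : group_topology gT op.
Local Notation "x ** y" := (gmul gT x y) (at level 40, left associativity).
Local Notation "1" := (gone gT).
Local Notation inv := (ginv gT).

Lemma gt_top : is_topology op.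
Proof. by case: Hg. Qed.

Lemma cont_mul2 (X : Type) (oX : topology X) (f1 f2 : X -> T) : is_topology oX ->
  continuous_top oX op f1 -> continuous_top oX op f2 ->
  continuous_top oX op (fun x => f1 x ** f2 x).
Proof.
move=> hX c1 c2.
apply: (cont_comp (f := fun x => (f1 x, f2 x)) (h := fun q => q.1 ** q.2)).
  exact: cont_pair hX c1 c2.
by case: Hg => _ [].
Qed.

Lemma cont_inv : continuous_top op op inv.
Proof. by case: Hg => _ []. Qed.

Lemma cont_mulL a : continuous_top op op (fun x => a ** x).
Proof.
apply: cont_mul2; [exact: gt_top|exact: cont_const gt_top|exact: cont_id].
Qed.

Lemma cont_mulR a : continuous_top op op (fun x => x ** a).
Proof.
apply: cont_mul2; [exact: gt_top|exact: cont_id|exact: cont_const gt_top].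
Qed.

Lemma open_subgroup (V : T -> Prop) :
  compact_top op -> hausdorff_top op -> totally_disconnected_top op ->
  op V -> V 1 ->
  exists U, op U /\ U 1 /\ (forall x y, U x -> U y -> U (x ** y)) /\
    (forall x, U x -> U (inv x)) /\ (forall x, U x -> V x).
Proof.
move=> cT hT tT oV V1.
have Hop := gt_top.
have [K [[oK oKc] [K1 KV]]] := clopen_nbhd Hop cT hT tT oV V1.
have cK := compact_closed cT oKc.
have cm : continuous_top (prod_top op op) op (fun q => q.1 ** q.2) by case: Hg => _ [].
pose I := {AB : (T -> Prop) * (T -> Prop) | op AB.1 /\ op AB.2 /\ AB.2 1 /\
            forall a b, AB.1 a -> AB.2 b -> K (a ** b)}.
have [l hl] : exists l : list I, forall x, K x -> exists i, List.In i l /\ (proj1_sig i).1 x.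
  apply: cK => [[AB [? [? ?]]] //|k Kk].
  have k1 : K ((k, 1).1 ** (k, 1).2) by rewrite /= Gmulg1r.
  have [A [B [oA [oB [Ak [B1 h]]]]]] := cm K oK (k, 1) k1.
  by exists (exist _ (A, B) (conj oA (conj oB (conj B1 h)))).
pose N y := forall i, List.In i l -> (proj1_sig i).2 y.
have oN : op N by apply: op_inter_list => // -[AB [? [? ?]]].
have N1 : N 1 by move=> [AB [? [? [? ?]]]].
have KN : forall x n, K x -> N n -> K (x ** n).
  move=> x n Kx Nn; have [i [hi h1]] := hl x Kx.
  have [_ [_ [_ h]]] := proj2_sig i.
  exact: h _ _ h1 (Nn _ hi).
pose W y := N y /\ N (inv y).
have oW : op W by apply: op_and => //; apply: cont_inv.
pose U x := forall k, K k -> K (k ** x) /\ K (k ** inv x).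
have WU : forall w, W w -> U w by move=> w [N1w N2w] k Kk; split; apply: KN.
have Umul : forall x y, U x -> U y -> U (x ** y).
  move=> x y Ux Uy k Kk; split.
    by rewrite gmulA; apply: (Uy _ (Ux _ Kk).1).1.
  by rewrite Ginvg_mul gmulA; apply: (Ux _ (Uy _ Kk).2).2.
exists U; split.
  apply: (op_local Hop) => x Ux.
  exists (fun y => W (inv x ** y)); split; first exact: cont_mulL.
  split; first by rewrite gmulV; split => //; rewrite Ginvg1.
  by move=> y /WU Uy; rewrite -(GmulKVg gT x y); apply: Umul.
split; first by move=> k Kk; rewrite Ginvg1 Gmulg1r.
split => //.
split; first by move=> x Ux k Kk; rewrite GinvgK; split; [exact: (Ux _ Kk).2|exact: (Ux _ Kk).1].
by move=> x Ux; apply: KV; rewrite -(gmul1 gT x); apply: (Ux _ K1).1.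
Qed.

End GTop.


Set Implicit Arguments.
Unset Strict Implicit.
Unset Printing Implicit Defensive.

Import GRing.Theory.
Local Open Scope ring_scope.

Section Mod.
Variables (G : Type) (gG : group_on G) (M : finZmodType) (act : G -> M -> M).
Hypothesis Hmod : is_G_module gG act.

Lemma act1 m : act (gone gG) m = m. Proof. by case: Hmod. Qed.
Lemma actM g h m : act (gmul gG g h) m = act g (act h m). Proof. by case: Hmod => _ []. Qed.
Lemma actD g m n : act g (m + n) = act g m + act g n. Proof. by case: Hmod => _ []. Qed.
Lemma act0 g : act g 0 = 0.
Proof. by apply: (@addrI _ (act g 0)); rewrite -actD !addr0. Qed.
Lemma actN g m : act g (- m) = - act g m.
Proof. by apply/eqP; rewrite -subr_eq0 opprK -actD addNr act0. Qed.
Lemma actB g m n : act g (m - n) = act g m - act g n.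
Proof. by rewrite actD actN. Qed.
Lemma actVK g m : act (ginv gG g) (act g m) = m.
Proof. by rewrite -actM gmulV act1. Qed.
Lemma actKV g m : act g (act (ginv gG g) m) = m.
Proof. by rewrite -actM GmulgVr act1. Qed.
End Mod.

Section Ext.
Variables (G : Type) (gG : group_on G) (M : finZmodType) (act : G -> M -> M).
Hypothesis Hmod : is_G_module gG act.
Variables (H : Type) (gH : group_on H) (i : M -> H) (p : H -> G).
Hypothesis Hext : is_extension gG act gH i p.
Local Notation "x ** y" := (gmul gH x y) (at level 40, left associativity).
Local Notation gm := (gmul gG).

Lemma iD m n : i (m + n) = i m ** i n. Proof. by case: Hext. Qed.
Lemma i_inj : injective i. Proof. by case: Hext => _ []. Qed.
Lemma pM x y : p (x ** y) = gm (p x) (p y). Proof. by case: Hext => _ [_ []]. Qed.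
Lemma p_surj g : exists h, p h = g. Proof. by case: Hext => _ [_ [_ []]]. Qed.
Lemma p_ker h : p h = gone gG <-> exists m, h = i m. Proof. by case: Hext => _ [_ [_ [_ []]]]. Qed.
Lemma i_conj h m : h ** i m ** ginv gH h = i (act (p h) m). Proof. by case: Hext => _ [_ [_ [_ []]]]. Qed.

Lemma i0 : i 0 = gone gH.
Proof. by apply: Gidem_one; rewrite -iD addr0. Qed.
Lemma iN m : i (- m) = ginv gH (i m).
Proof. by apply: Ginv_unique; rewrite -iD subrr i0. Qed.
Lemma p1 : p (gone gH) = gone gG.
Proof. by apply: Gidem_one; rewrite -pM gmul1. Qed.
Lemma pV h : p (ginv gH h) = ginv gG (p h).
Proof. by apply: Ginv_unique; rewrite -pM GmulgVr p1. Qed.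
Lemma p_i m : p (i m) = gone gG.
Proof. by apply: (proj2 (p_ker (i m))); exists m. Qed.
Lemma conj_i h m : h ** i m = i (act (p h) m) ** h.
Proof. by rewrite -i_conj GmulgKV. Qed.
Lemma p_imul m x : p (i m ** x) = p x.
Proof. by rewrite pM p_i gmul1. Qed.

Section Sec.
Variable s : G -> H.
Hypothesis Hs : forall g, p (s g) = g.

Definition ecoord (h : H) : M :=
  epsilon (inhabits 0) (fun m => i m = h ** ginv gH (s (p h))).

Lemma coord_spec h : h = i (ecoord h) ** s (p h).
Proof.
have : i (ecoord h) = h ** ginv gH (s (p h)).
  apply: (epsilon_spec (inhabits 0) (fun m => i m = h ** ginv gH (s (p h)))).
  have [m Em] := proj1 (p_ker (h ** ginv gH (s (p h)))) ltac:(by rewrite pM pV Hs GmulgVr).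
  by exists m.
by move=> ->; rewrite GmulgKV.
Qed.

Lemma p_is m g : p (i m ** s g) = g.
Proof. by rewrite p_imul Hs. Qed.

Lemma coord_is m g : ecoord (i m ** s g) = m.
Proof.
have E := coord_spec (i m ** s g); rewrite p_is in E.
by apply/esym/i_inj/(Gmulg_cancel_r E).
Qed.

Lemma coord_s g : ecoord (s g) = 0.
Proof. by rewrite -(coord_is 0 g) i0 gmul1. Qed.

Lemma decomp_eq x y : p x = p y -> ecoord x = ecoord y -> x = y.
Proof. by move=> E1 E2; rewrite (coord_spec x) (coord_spec y) E1 E2. Qed.

Lemma coord_imul m x : ecoord (i m ** x) = m + ecoord x.
Proof. by rewrite {1}(coord_spec x) gmulA -iD coord_is. Qed.

Definition fs g h := ecoord (s g ** s h).

Lemma fs_spec g h : s g ** s h = i (fs g h) ** s (gm g h).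
Proof. by rewrite {1}(coord_spec (s g ** s h)) pM !Hs. Qed.

Lemma coord_mul x y : ecoord (x ** y) = ecoord x + act (p x) (ecoord y) + fs (p x) (p y).
Proof.
have E : x ** y = i (ecoord x + act (p x) (ecoord y) + fs (p x) (p y)) ** s (gm (p x) (p y)).
  rewrite {1}(coord_spec x) {1}(coord_spec y).
  rewrite -(gmulA gH (i (ecoord x))) (gmulA gH (s (p x))) conj_i Hs.
  by rewrite -gmulA fs_spec !gmulA !iD.
by rewrite E coord_is.
Qed.

Lemma fs_cocycle : is_2cocycle gG act fs.
Proof.
move=> g h k.
have E : fs g h + fs (gm g h) k = act g (fs h k) + fs g (gm h k).
  have := congr1 ecoord (gmulA gH (s g) (s h) (s k)).
  rewrite !coord_mul !pM !Hs !coord_s !(act0 Hmod) !addr0 !add0r.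
  by rewrite /fs => ->.
by rewrite (addrAC (act g (fs h k))) -E addrK subrr.
Qed.

Lemma coord1 : ecoord (gone gH) = - fs (gone gG) (gone gG).
Proof.
have E := coord_spec (gone gH); rewrite p1 in E.
have Es : s (gone gG) = i (- ecoord (gone gH)).
  by rewrite iN; apply: (@Gmulg_cancel_l _ gH (i (ecoord (gone gH)))); rewrite GmulgVr -E.
by rewrite /fs {1}Es coord_is opprK.
Qed.

End Sec.

Lemma ac_helper (V : zmodType) (a b c d : V) : a + b + c - d = c + (b - d + a).
Proof. by rewrite addrCA (addrC a) addrA [RHS]addrAC (addrAC b (-d) a) addrAC. Qed.

Lemma fs_change (s1 s2 : G -> H) (Hs1 : forall g, p (s1 g) = g) (Hs2 : forall g, p (s2 g) = g) g h :
  fs s1 g h = fs s2 g h + coboundary1 gG act (fun g => ecoord s2 (s1 g)) g h.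
Proof.
have E := congr1 (ecoord s2) (fs_spec Hs1 g h).
rewrite coord_mul // coord_imul // !Hs1 in E.
rewrite /coboundary1 -ac_helper E.
by rewrite addrK.
Qed.

End Ext.


Set Implicit Arguments.
Unset Strict Implicit.
Unset Printing Implicit Defensive.

Import GRing.Theory.
Local Open Scope ring_scope.

Lemma prod_top_top (A B : Type) (oA : topology A) (oB : topology B) :
  is_topology oA -> is_topology oB -> is_topology (prod_top oA oB).
Proof.
move=> hA hB; split.
  move=> q _; exists (fun _ => True), (fun _ => True).
  by split; [exact: op_T|split; [exact: op_T|]].
split.
  move=> I U oU q [j Uj].
  have [V1 [V2 [o1 [o2 [h1 [h2 h]]]]]] := oU j q Uj.
  exists V1, V2; do 4!(split=> //).
  by move=> a b Va Vb; exists j; apply: h.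
move=> U V oU oV q [Uq Vq].
have [U1 [U2 [o1 [o2 [h1 [h2 h]]]]]] := oU q Uq.
have [V1 [V2 [o3 [o4 [h3 [h4 h']]]]]] := oV q Vq.
exists (fun a => U1 a /\ V1 a), (fun b => U2 b /\ V2 b).
split; first exact: op_and.
split; first exact: op_and.
do 2!(split=> //).
by move=> a b [? ?] [? ?]; split; [apply: h|apply: h'].
Qed.

Lemma In_mem (T : eqType) (x : T) (s : seq T) : x \in s -> List.In x s.
Proof.
elim: s => [|y s IH] //=; rewrite in_cons => /orP [/eqP ->|h]; [by left|by right; apply: IH].
Qed.

Section LC.
Variables (M : finZmodType).

Definition lc (X : Type) (oX : topology X) (phi : X -> M) := forall m, oX (fun x => phi x = m).

Variables (X : Type) (oX : topology X).
Hypothesis hX : is_topology oX.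

Lemma lc_ext (phi psi : X -> M) : (forall x, phi x = psi x) -> lc oX psi -> lc oX phi.
Proof. by move=> E; have -> : phi = psi by apply: functional_extensionality. Qed.

Lemma lc_const m0 : lc oX (fun _ => m0).
Proof.
move=> m; case: (classic (m0 = m)) => E.
  by apply: (@op_ext X oX (fun _ => True)); [|exact: op_T].
by apply: (@op_ext X oX (fun _ => False)); [|exact: op_empty].
Qed.

Lemma lc_add (phi psi : X -> M) : lc oX phi -> lc oX psi -> lc oX (fun x => phi x + psi x).
Proof.
move=> c1 c2 m.
apply: (@op_ext X oX (fun x => exists a, phi x = a /\ psi x = m - a)).
  move=> x; split => [[a [<- ->]]|E]; first by rewrite addrC subrK.
  by exists (phi x); split=> //; rewrite -E addrC addKr.
by apply: op_union => // a; apply: op_and.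
Qed.

Lemma lc_opp (phi : X -> M) : lc oX phi -> lc oX (fun x => - phi x).
Proof.
move=> c m; apply: (@op_ext X oX (fun x => phi x = - m)) => //.
by move=> x; split => [->|<-]; rewrite opprK.
Qed.

Lemma lc_neq (phi : X -> M) m : lc oX phi -> oX (fun x => phi x <> m).
Proof.
move=> c; apply: (@op_ext X oX (fun x => exists n, n <> m /\ phi x = n)).
  by move=> x; split => [[n [nm ->]]|h]; [|exists (phi x)].
apply: op_union => // n; case: (classic (n = m)) => E.
  by apply: (@op_ext X oX (fun _ => False)); [move=> x; split => // -[]|exact: op_empty].
by apply: (@op_ext X oX (fun x => phi x = n)) => // x; split => [|[]].
Qed.

Lemma lc_comp (Y : Type) (oY : topology Y) (psi : X -> Y) (phi : Y -> M) :
  continuous_top oX oY psi -> lc oY phi -> lc oX (fun x => phi (psi x)).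
Proof. by move=> c l m; apply: (c (fun y => phi y = m)). Qed.

End LC.

Section ExtTop.
Variables (G : Type) (gG : group_on G) (tau : topology G) (M : finZmodType) (act : G -> M -> M).
Hypothesis Htau : profinite_topology gG tau.
Hypothesis Hmod : is_G_module gG act.
Hypothesis Hcont : continuous_action tau act.
Variables (H : Type) (gH : group_on H) (i : M -> H) (p : H -> G).
Hypothesis Hext : is_extension gG act gH i p.
Local Notation "x ** y" := (gmul gH x y) (at level 40, left associativity).
Local Notation gm := (gmul gG).

Lemma tau_gt : group_topology gG tau. Proof. by case: Htau. Qed.
Lemma tau_top : is_topology tau. Proof. by case: Htau => -[]. Qed.

Lemma lc_act (X : Type) (oX : topology X) (psi : X -> G) (phi : X -> M) :
  is_topology oX -> continuous_top oX tau psi -> lc oX phi ->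
  lc oX (fun x => act (psi x) (phi x)).
Proof.
move=> hX c l m.
apply: (@op_ext X oX (fun x => exists a, phi x = a /\ act (psi x) a = m)).
  by move=> x; split => [[a [-> ->]]|<-]; [|exists (phi x)].
apply: op_union => // a; apply: op_and => //.
exact: (c (fun g => act g a = m)).
Qed.

Lemma lc_f2 (X : Type) (oX : topology X) (f : G -> G -> M) (psi1 psi2 : X -> G) :
  is_topology oX -> continuous_2cochain tau f ->
  continuous_top oX tau psi1 -> continuous_top oX tau psi2 ->
  lc oX (fun x => f (psi1 x) (psi2 x)).
Proof.
move=> hX cf c1 c2 m.
exact: (cont_pair hX c1 c2 (cf m)).
Qed.

Section Sec.
Variable s : G -> H.
Hypothesis Hs : forall g, p (s g) = g.

Definition Ts : topology H := fun W => forall m, tau (fun g => W (i m ** s g)).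

Lemma Ts_top : is_topology Ts.
Proof.
have ht := tau_top.
split; first by move=> m; exact: op_T.
split; first by move=> I U oU m; apply: op_union => // j; apply: oU.
by move=> U V oU oV m; apply: op_and.
Qed.

Lemma Ts_cont_form (X : Type) (oX : topology X) (phi : X -> M) (psi : X -> G) :
  is_topology oX -> lc oX phi -> continuous_top oX tau psi ->
  continuous_top oX Ts (fun x => i (phi x) ** s (psi x)).
Proof.
move=> hX l c W oW.
apply: (@op_ext X oX (fun x => exists m, phi x = m /\ W (i m ** s (psi x)))).
  by move=> x; split => [[m [-> hW]]|h]; [|exists (phi x)].
apply: op_union => // m; apply: op_and => //.
exact: (c (fun g => W (i m ** s g))).
Qed.

Lemma Ts_cont (X : Type) (oX : topology X) (F : X -> H) :
  is_topology oX -> lc oX (fun x => ecoord gH i p s (F x)) -> continuous_top oX tau (fun x => p (F x)) ->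
  continuous_top oX Ts F.
Proof.
move=> hX l c.
have -> : F = (fun x => i (ecoord gH i p s (F x)) ** s (p (F x))).
  by apply: functional_extensionality => x; rewrite -(coord_spec Hext Hs).
exact: Ts_cont_form.
Qed.

Lemma p_cont_Ts : continuous_top Ts tau p.
Proof.
move=> U oU m.
by apply: (@op_ext G tau U) => // g; rewrite (p_is Hext Hs).
Qed.

Lemma coord_lc_Ts : lc Ts (ecoord gH i p s).
Proof.
move=> m n; apply: (@op_ext G tau (fun _ => n = m)).
  by move=> g; rewrite (coord_is Hext Hs).
exact: (lc_const tau_top n).
Qed.

Lemma cont_is m : continuous_top tau Ts (fun g => i m ** s g).
Proof.
apply: (Ts_cont_form (phi := fun _ => m) (psi := fun g => g)).
- exact: tau_top.
- exact: (lc_const tau_top).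
- exact: cont_id.
Qed.

Lemma Ts_quot U : quotient_top Ts p U <-> tau U.
Proof.
rewrite /quotient_top /Ts.
have E : forall m, (fun g => U (p (i m ** s g))) = U.
  by move=> m; apply: functional_extensionality => g; rewrite (p_is Hext Hs).
split => [/(_ 0)|h m]; by rewrite E.
Qed.

Hypothesis Hf : continuous_2cochain tau (fs gH i p s).

Lemma Ts_group : group_topology gH Ts.
Proof.
have ht := tau_top; have hT := Ts_top; have hP := prod_top_top hT hT.
have gt := tau_gt.
split => //; split.
  apply: Ts_cont => //.
    apply: (lc_ext (psi := fun x : H * H => ecoord gH i p s x.1 + act (p x.1) (ecoord gH i p s x.2)
                + fs gH i p s (p x.1) (p x.2))).
      by move=> x; rewrite (coord_mul Hext Hs).
    apply: lc_add => //; first apply: lc_add => //.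
    - exact: (lc_comp (@cont_fst _ _ Ts Ts hT) coord_lc_Ts).
    - apply: lc_act => //; first exact: (cont_comp (@cont_fst _ _ Ts Ts hT) p_cont_Ts).
      exact: (lc_comp (@cont_snd _ _ Ts Ts hT) coord_lc_Ts).
    - apply: lc_f2 => //.
        exact: (cont_comp (@cont_fst _ _ Ts Ts hT) p_cont_Ts).
      exact: (cont_comp (@cont_snd _ _ Ts Ts hT) p_cont_Ts).
  have -> : (fun x : H * H => p (x.1 ** x.2)) = (fun x => gm (p x.1) (p x.2)).
    by apply: functional_extensionality => x; rewrite (pM Hext).
  apply: cont_mul2 => //.
    exact: (cont_comp (@cont_fst _ _ Ts Ts hT) p_cont_Ts).
  exact: (cont_comp (@cont_snd _ _ Ts Ts hT) p_cont_Ts).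
apply: Ts_cont => //.
  apply: (lc_ext (psi := fun x => act (ginv gG (p x))
      (ecoord gH i p s (gone gH) - ecoord gH i p s x - fs gH i p s (p x) (ginv gG (p x))))).
    move=> x; have := coord_mul Hext Hs x (ginv gH x).
    rewrite GmulgVr (pV Hext) // => ->.
    by rewrite (addrAC (ecoord _ _ _ _ x + _)) addrK (addrC (ecoord _ _ _ _ x)) addrK (actVK Hmod).
  apply: lc_act => //.
    exact: (cont_comp p_cont_Ts (cont_inv gt)).
  apply: lc_add => //; last apply: lc_opp => //.
    apply: lc_add => //; first exact: (lc_const hT).
    exact: lc_opp coord_lc_Ts.
  apply: lc_f2 => //; first exact: p_cont_Ts.
  exact: (cont_comp p_cont_Ts (cont_inv gt)).
have -> : (fun x => p (ginv gH x)) = (fun x => ginv gG (p x)).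
  by apply: functional_extensionality => x; rewrite (pV Hext).
exact: (cont_comp p_cont_Ts (cont_inv gt)).
Qed.

Lemma Ts_compact : compact_top Ts.
Proof.
case: Htau => _ [cG _].
move=> I U oU cov.
have hl : forall m, exists l : list I, forall g, exists j, List.In j l /\ U j (i m ** s g).
  move=> m; apply: cG; first by move=> j; apply: oU.
  by move=> g; apply: cov.
pose L m := epsilon (inhabits nil) (fun l : list I => forall g, exists j, List.In j l /\ U j (i m ** s g)).
exists (List.flat_map L (enum M)) => x.
have [j [hj Uj]] := epsilon_spec (inhabits nil) _ (hl (ecoord gH i p s x)) (p x).
exists j; split; last by rewrite -(coord_spec Hext Hs) in Uj.
apply/List.in_flat_map; exists (ecoord gH i p s x); split => //.
by apply: In_mem; rewrite mem_enum.
Qed.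

Lemma Ts_hausdorff : hausdorff_top Ts.
Proof.
case: Htau => _ [_ [hG _]].
move=> x y nxy.
case: (classic (p x = p y)) => Ep.
  have nc : ecoord gH i p s x <> ecoord gH i p s y by move=> Ec; apply: nxy; exact: (decomp_eq Hext Hs).
  exists (fun h => ecoord gH i p s h = ecoord gH i p s x), (fun h => ecoord gH i p s h = ecoord gH i p s y).
  split; first exact: coord_lc_Ts.
  split; first exact: coord_lc_Ts.
  do 2!(split=> //).
  by move=> z -> E.
have [U [V [oU [oV [Ux [Vy d]]]]]] := hG _ _ Ep.
exists (fun h => U (p h)), (fun h => V (p h)).
split; first exact: p_cont_Ts.
split; first exact: p_cont_Ts.
do 2!(split=> //).
by move=> z; apply: d.
Qed.

Lemma Ts_td : totally_disconnected_top Ts.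
Proof.
case: Htau => _ [_ [_ tG]].
move=> S cS x y Sx Sy.
have Ec : ecoord gH i p s x = ecoord gH i p s y.
  apply: NNPP => nc; apply: cS.
  exists (fun h => ecoord gH i p s h = ecoord gH i p s x), (fun h => ecoord gH i p s h <> ecoord gH i p s x).
  split; first exact: coord_lc_Ts.
  split; first by apply: lc_neq; [exact: Ts_top|exact: coord_lc_Ts].
  split; first by move=> z _; apply: classic.
  split; first by exists x.
  split; first by exists y; split=> // E; apply: nc.
  by move=> z _ ->.
have Ep : p x = p y.
  apply: (tG _ (connected_image p_cont_Ts cS)); [by exists x|by exists y].
exact: (decomp_eq Hext Hs).
Qed.

Lemma Ts_profinite : profinite_topology gH Ts.
Proof.
split; first exact: Ts_group.
split; first exact: Ts_compact.
split; first exact: Ts_hausdorff.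
exact: Ts_td.
Qed.

End Sec.
End ExtTop.


Set Implicit Arguments.
Unset Strict Implicit.
Unset Printing Implicit Defensive.

Import GRing.Theory.
Local Open Scope ring_scope.

Lemma compact_image (A B : Type) (oA : topology A) (oB : topology B) (f : A -> B) K :
  continuous_top oA oB f -> compact_set oA K ->
  compact_set oB (fun y => exists x, K x /\ f x = y).
Proof.
move=> cf cK I U oU cov.
have [l hl] : exists l : list I, forall x, K x -> exists j, List.In j l /\ U j (f x).
  apply: (cK I (fun j x => U j (f x))); first by move=> j; apply: (cf (U j)).
  by move=> x Kx; apply: cov; exists x.
by exists l => y [x [Kx <-]]; apply: hl.
Qed.

Section ExtT.
Variables (G : Type) (gG : group_on G) (tau : topology G) (M : finZmodType) (act : G -> M -> M).
Hypothesis Htau : profinite_topology gG tau.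
Hypothesis Hmod : is_G_module gG act.
Hypothesis Hcont : continuous_action tau act.
Variables (H : Type) (gH : group_on H) (i : M -> H) (p : H -> G).
Hypothesis Hext : is_extension gG act gH i p.
Local Notation "x ** y" := (gmul gH x y) (at level 40, left associativity).
Local Notation gm := (gmul gG).
Variable T : topology H.
Hypothesis HT : profinite_topology gH T.
Hypothesis Hpc : continuous_top T tau p.

Lemma T_gt : group_topology gH T. Proof. by case: HT. Qed.
Lemma T_top : is_topology T. Proof. by case: HT => -[]. Qed.

Lemma iso_nbhd : exists V, T V /\ V (gone gH) /\ forall m, V (i m) -> m = 0.
Proof.
have hT := T_top.
case: HT => _ [_ [hH _]].
have ex : forall m : M, exists U, T U /\ U (gone gH) /\ (m <> 0 -> ~ U (i m)).
  move=> m; case: (classic (m = 0)) => [->|nm].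
    by exists (fun _ => True); split; [exact: op_T|split].
  have ne : gone gH <> i m by move=> E; apply: nm; apply: (i_inj Hext); rewrite -E (i0 Hext).
  have [U [V [oU [oV [U1 [Vm d]]]]]] := hH _ _ ne.
  by exists U; split=> //; split=> // _ Um; apply: (d (i m)).
pose Uf m := epsilon (inhabits (fun _ : H => True))
  (fun U => T U /\ U (gone gH) /\ (m <> 0 -> ~ U (i m))).
have hUf : forall m, T (Uf m) /\ Uf m (gone gH) /\ (m <> 0 -> ~ Uf m (i m)).
  by move=> m; apply: (epsilon_spec _ _ (ex m)).
exists (fun h => forall m, List.In m (enum M) -> Uf m h).
split; first by apply: op_inter_list => // m _; case: (hUf m).
split; first by move=> m _; case: (hUf m) => _ [].
move=> m hm; apply: NNPP => nm.
have [_ [_ h]] := hUf m; apply: (h nm); apply: hm.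
by apply: In_mem; rewrite mem_enum.
Qed.

Lemma p_open V : T V -> tau (fun g => exists h, V h /\ p h = g).
Proof.
have hT := T_top; have ht := tau_top Htau.
case: HT => _ [cH _].
case: Htau => _ [_ [hG _]].
move=> oV.
pose VM h := exists m, V (h ** i m).
have oVM : T VM.
  rewrite /VM; apply: op_union => // m; exact: (cont_mulR T_gt (i m) oV).
have cF : compact_set T (fun h => ~ VM h).
  apply: compact_closed => //; exact: op_not_not.
have cpF := compact_image Hpc cF.
have := compact_hausdorff_closed ht hG cpF.
apply: op_ext => g; split.
  move=> npF; have [h Eh] := p_surj Hext g.
  have [m Vm] : VM h by apply: NNPP => nV; apply: npF; exists h.
  by exists (h ** i m); split=> //; rewrite (pM Hext) (p_i Hext) Gmulg1r.
move=> [h0 [Vh0 Eh0]] [h [Fh Eph]].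
apply: Fh.
have [m Em] := proj1 (p_ker Hext (ginv gH h ** h0))
  ltac:(by rewrite (pM Hext) (pV Hext) Eph Eh0 gmulV).
by exists m; rewrite -Em GmulKVg.
Qed.

Section WithSec.
Variable s : G -> H.
Hypothesis Hs : forall g, p (s g) = g.
Hypothesis Hsc : continuous_top tau T s.

Lemma ecoord_lc_T : lc T (ecoord gH i p s).
Proof.
have hT := T_top; have gT := T_gt.
have [V [oV [V1 Vi]]] := iso_nbhd.
move=> m.
have E : forall h, h ** ginv gH (s (p h)) = i (ecoord gH i p s h).
  by move=> h; rewrite {1}(coord_spec Hext Hs h) GmulgK.
apply: (@op_ext H T (fun h => V (i (- m) ** (h ** ginv gH (s (p h)))))).
  move=> h; rewrite E -(iD Hext); split => [/Vi /eqP|<-].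
    by rewrite addrC subr_eq0 => /eqP.
  by rewrite addNr (i0 Hext).
have h1 : T (fun y => V (i (- m) ** y)) := cont_mulL gT (i (- m)) oV.
apply: (cont_mul2 gT hT (@cont_id _ T) _ h1).
apply: (cont_comp (f := fun x => s (p x))); last exact: cont_inv.
exact: (cont_comp Hpc Hsc).
Qed.

Lemma T_Ts W : T W <-> Ts tau gH i s W.
Proof.
have hT := T_top; have gT := T_gt.
split.
  by move=> oW m; apply: (cont_comp Hsc (cont_mulL gT (i m)) oW).
move=> oW.
apply: (@op_ext H T (fun h => exists m, ecoord gH i p s h = m /\ W (i m ** s (p h)))).
  move=> h; split => [[m [<- hW]]|hW]; first by rewrite {1}(coord_spec Hext Hs h).
  by exists (ecoord gH i p s h); rewrite -(coord_spec Hext Hs).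
apply: op_union => // m; apply: op_and => //; first exact: ecoord_lc_T.
exact (Hpc (oW m)).
Qed.

Lemma fs_cont_T : continuous_2cochain tau (fs gH i p s).
Proof.
have hT := T_top; have gT := T_gt; have ht := tau_top Htau.
have hP := prod_top_top ht ht.
move=> m.
apply: (lc_comp (psi := fun q : G * G => s q.1 ** s q.2) (phi := ecoord gH i p s)).
  apply: (cont_mul2 gT hP).
    exact: (cont_comp (@cont_fst _ _ tau tau ht) Hsc).
  exact: (cont_comp (@cont_snd _ _ tau tau ht) Hsc).
exact: ecoord_lc_T.
Qed.

End WithSec.

Lemma exists_section : exists s, (forall g, p (s g) = g) /\ continuous_top tau T s.
Proof.
have hT := T_top; have gT := T_gt; have ht := tau_top Htau; have gt := tau_gt Htau.
case: HT => _ [cH [hH tH]].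
have [V0 [oV0 [V01 V0i]]] := iso_nbhd.
have [U [oU [U1 [Umul [Uinv UV]]]]] := open_subgroup gT cH hH tH oV0 V01.
pose PU g := exists u, U u /\ p u = g.
have oPU : forall W, T W -> tau (fun g => exists u, (U u /\ W u) /\ p u = g).
  by move=> W oW; apply: p_open; apply: op_and.
have oPU' : tau PU.
  apply: (@op_ext G tau _ PU _ (oPU _ (op_T hT))).
  by move=> g; split => [[u [[Uu _] E]]|[u [Uu E]]]; exists u.
have PU1 : PU (gone gG) by exists (gone gH); split=> //; rewrite (p1 Hext).
have PUmul : forall a b, PU a -> PU b -> PU (gm a b).
  by move=> a b [u [Uu <-]] [v [Uv <-]]; exists (u ** v); rewrite (pM Hext); split=> //; apply: Umul.
have PUinv : forall a, PU a -> PU (ginv gG a).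
  by move=> a [u [Uu <-]]; exists (ginv gH u); rewrite (pV Hext); split=> //; apply: Uinv.
have Uinj : forall u v, U u -> U v -> p u = p v -> u = v.
  move=> u v Uu Uv E.
  have [m Em] := proj1 (p_ker Hext (ginv gH u ** v))
    ltac:(by rewrite (pM Hext) (pV Hext) E gmulV).
  have m0 : m = 0 by apply: V0i; rewrite -Em; apply: UV; apply: Umul => //; apply: Uinv.
  by rewrite -(GmulKVg gH u v) Em m0 (i0 Hext) Gmulg1r.
pose cls g := fun g' => PU (gm (ginv gG g) g').
have clsE : forall a b, PU (gm (ginv gG a) b) -> cls a = cls b.
  move=> a b hab; apply: functional_extensionality => x; apply: propositional_extensionality.
  rewrite /cls; split => h.
    have -> : gm (ginv gG b) x = gm (ginv gG (gm (ginv gG a) b)) (gm (ginv gG a) x).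
      by rewrite Ginvg_mul GinvgK -gmulA GmulKVg.
    by apply: PUmul => //; apply: PUinv.
  have -> : gm (ginv gG a) x = gm (gm (ginv gG a) b) (gm (ginv gG b) x).
    by rewrite -gmulA GmulKVg.
  exact: PUmul.
have clsself : forall a, cls a a by move=> a; rewrite /cls gmulV.
pose r g := epsilon (inhabits (gone gH)) (fun h => cls (p h) = cls g).
have rspec : forall g, cls (p (r g)) = cls g.
  move=> g; apply: (epsilon_spec (inhabits (gone gH)) (fun h => cls (p h) = cls g)).
  by have [h Eh] := p_surj Hext g; exists h; rewrite Eh.
pose iota y := epsilon (inhabits (gone gH)) (fun u => U u /\ p u = y).
have iotaspec : forall y, PU y -> U (iota y) /\ p (iota y) = y.
  by move=> y hy; apply: (epsilon_spec (inhabits (gone gH)) (fun u => U u /\ p u = y)).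
have Pr : forall g, PU (gm (ginv gG (p (r g))) g).
  by move=> g; have := clsself g; rewrite -rspec.
pose s g := r g ** iota (gm (ginv gG (p (r g))) g).
have Hs : forall g, p (s g) = g.
  by move=> g; rewrite /s (pM Hext) (iotaspec _ (Pr g)).2 GmulKVg.
exists s; split => // W oW.
apply: (op_local ht) => g0 Wg0.
set r0 := r g0; set a := p r0.
pose Z y := exists u, (U u /\ W (r0 ** u)) /\ p u = y.
have oZ : tau Z by apply: oPU; exact: (cont_mulL gT r0 oW).
exists (fun g => PU (gm (ginv gG g0) g) /\ Z (gm (ginv gG a) g)).
split.
  apply: op_and => //; first exact: (cont_mulL gt (ginv gG g0) oPU').
  exact: (cont_mulL gt (ginv gG a) oZ).
split.
  split; first by have := clsself g0.
  exists (iota (gm (ginv gG a) g0)); split; last exact: (iotaspec _ (Pr g0)).2.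
  by split; [exact: (iotaspec _ (Pr g0)).1|].
move=> g [Pg [u [[Uu Wu] Eu]]].
have rg : r g = r0.
  by rewrite /r0 /r (clsE _ _ Pg).
rewrite /s rg -/a.
have Pa : PU (gm (ginv gG a) g) by rewrite /a -rg; apply: Pr.
have -> : iota (gm (ginv gG a) g) = u.
  apply: Uinj; [exact: (iotaspec _ Pa).1|exact: Uu|].
  by rewrite (iotaspec _ Pa).2 Eu.
exact: Wu.
Qed.

End ExtT.


Set Implicit Arguments.
Unset Strict Implicit.
Unset Printing Implicit Defensive.

Import GRing.Theory.
Local Open Scope ring_scope.

Section S. Variable V : zmodType.
Lemma H1 (a b f X F Y Z : V) : f + F = Y + Z -> a + b + f + X + F = a + (b + X + Y) + Z.
Proof. by move=> E; rewrite (addrAC (a + b) f X) -(addrA (a + b + X)) E !addrA. Qed.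
Lemma H2 (b c : V) : - c + b + c = b.
Proof. by rewrite addrAC addNr add0r. Qed.
Lemma H3 (c x y : V) : - c - x - y + x + y = - c.
Proof. by rewrite (addrAC _ (- y)) subrK subrK. Qed.
Lemma H4 (m n c : V) : m - c + (n - c) + c = m + n - c.
Proof. by rewrite addrA subrK (addrAC m). Qed.
Lemma H5 (a gm gc c : V) : a + (gm - gc) + gc = gm - c + a + c.
Proof. by rewrite addrA subrK (addrAC gm) subrK addrC. Qed.
Lemma H6 (a c : V) : a - c + 0 + c = a.
Proof. by rewrite addr0 subrK. Qed.
Lemma H8 (f0 f' x y z : V) : f0 - f' = x - y + z -> f0 + (- x - - y + - z) = f'.
Proof.
move=> E; have -> : - x - - y - z = - (x - y + z) by rewrite !opprD.
by rewrite -E opprB addrC subrK.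
Qed.
Lemma H9 (f f' x y z : V) : f' = f + (x - y + z) -> f - f' = - x - - y - z.
Proof. by move=> ->; rewrite opprD addrA subrr add0r !opprD. Qed.
Lemma H10 (ex Gy f1 f2 D A B : V) : f1 - f2 = B - D + A ->
  ex + Gy + f1 + D = ex + A + (Gy + B) + f2.
Proof.
move=> E. have -> : f1 = f2 + (B - D + A) by rewrite -E addrC subrK.
rewrite !addrA (addrAC _ A D) subrK (addrAC (ex + Gy) f2 B).
by rewrite (addrAC ex A Gy) (addrAC (ex + Gy) A B) (addrAC (ex + Gy + B) A f2).
Qed.
Lemma H11 (m f1 f2 c1 : V) : f1 - f2 = c1 - c1 + c1 -> m + - f1 + c1 = m + - f2.
Proof.
move=> E. have -> : c1 = f1 - f2 by rewrite E subrr add0r.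
by rewrite addrA subrK.
Qed.
Lemma H12 (f1 f2 D dg Gdh : V) : f1 + D = dg + Gdh + f2 -> f1 - f2 = Gdh - D + dg.
Proof.
move=> E. have -> : f1 = dg + Gdh + f2 - D by rewrite -E addrK.
by rewrite addrAC addrK (addrC dg Gdh) addrAC.
Qed.


End S.

Section Twist.
Variables (G : Type) (gG : group_on G) (M : finZmodType) (act : G -> M -> M).
Hypothesis Hmod : is_G_module gG act.
Variable f : G -> G -> M.
Hypothesis Hf : is_2cocycle gG act f.
Local Notation gm := (gmul gG).
Local Notation e := (gone gG).

Lemma cocE g h k : f g h + f (gm g h) k = act g (f h k) + f g (gm h k).
Proof.
have /eqP := Hf g h k; rewrite subr_eq0 => /eqP <-.
by rewrite (addrAC (act g (f h k))) subrK.
Qed.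

Lemma f1k k : f e k = f e e.
Proof.
have := cocE e e k; rewrite !gmul1 (act1 Hmod) (addrC (f e e)) => /addrI.
by move=> ->.
Qed.

Lemma fg1 g : f g e = act g (f e e).
Proof.
have := cocE g e e; rewrite Gmulg1r gmul1 => /addIr.
by move=> ->.
Qed.

Definition tmul (x y : M * G) : M * G := (x.1 + act x.2 y.1 + f x.2 y.2, gm x.2 y.2).
Definition tone : M * G := (- f e e, e).
Definition tinv (x : M * G) : M * G :=
  (- f e e - act (ginv gG x.2) x.1 - f (ginv gG x.2) x.2, ginv gG x.2).

Lemma tmulA x y z : tmul x (tmul y z) = tmul (tmul x y) z.
Proof.
case: x => a g; case: y => b h; case: z => k l; rewrite /tmul /=.
congr pair; last by rewrite gmulA.
rewrite (actM Hmod) !(actD Hmod).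
by apply/esym/H1; apply: cocE.
Qed.

Lemma tmul1 x : tmul tone x = x.
Proof.
case: x => b h; rewrite /tmul /tone /= (act1 Hmod) (f1k h) gmul1.
by rewrite H2.
Qed.

Lemma tmulV x : tmul (tinv x) x = tone.
Proof.
case: x => a g; rewrite /tmul /tinv /tone /= gmulV.
by rewrite H3.
Qed.

Definition tgroup : group_on (M * G) := @GroupOn (M * G) tmul tinv tone tmulA tmul1 tmulV.

Definition ti (m : M) : M * G := (m - f e e, e).

Lemma text : is_extension gG act tgroup ti snd.
Proof.
split.
  move=> m n; rewrite /= /tmul /ti /= (act1 Hmod) gmul1.
  by rewrite H4.
split.
  by move=> m n [] /addIr.
split; first by [].
split; first by move=> g; exists (0, g).
split.
  move=> [a g] /=; split => [->|[m [_ ->]]] //.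
  by exists (a + f e e); rewrite /ti addrK.
move=> [a g] m.
have E : gmul tgroup (a, g) (ti m) = gmul tgroup (ti (act g m)) (a, g).
  rewrite /= /tmul /ti /= (f1k g) (fg1 g) (act1 Hmod) Gmulg1r gmul1 (actB Hmod).
  by congr pair; apply: H5.
by rewrite E GmulgK.
Qed.

Definition ts0 (g : G) : M * G := (0, g).

Lemma ts0_sec g : snd (ts0 g) = g. Proof. by []. Qed.

Lemma ecoord_t a g : ecoord tgroup ti snd ts0 (a, g) = a.
Proof.
have -> : (a, g) = gmul tgroup (ti a) (ts0 g).
  by rewrite /= /tmul /ti /ts0 /= (act1 Hmod) (f1k g) gmul1 H6.
exact: (coord_is text ts0_sec).
Qed.

Lemma fs_ts0 g h : fs tgroup ti snd ts0 g h = f g h.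
Proof.
by rewrite /fs /= /tmul /ts0 /= (act0 Hmod) !add0r ecoord_t.
Qed.

End Twist.


Set Implicit Arguments.
Unset Strict Implicit.
Unset Printing Implicit Defensive.

Import GRing.Theory.
Local Open Scope ring_scope.

Theorem mainTheorem17 (G : Type) (gG : group_on G) (tau : topology G)
  (Htau : profinite_topology gG tau)
  (M : finZmodType) (act : G -> M -> M)
  (Hmod : is_G_module gG act) (Hcont : continuous_action tau act) :
  (phi2_surjective gG tau act <->
     (forall (H : Type) (gH : group_on H) (i : M -> H) (p : H -> G),
        is_extension gG act gH i p ->
        exists T : topology H, profinite_topology gH T /\
          (forall U : G -> Prop, quotient_top T p U <-> tau U)))
  /\
  (phi2_injective gG tau act <->
     (forall (H : Type) (gH : group_on H) (i : M -> H) (p : H -> G),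
        is_extension gG act gH i p ->
        (exists T0 : topology H, profinite_topology gH T0 /\
           continuous_top T0 tau p) ->
        forall T1 T2 : topology H,
          profinite_topology gH T1 -> continuous_top T1 tau p ->
          profinite_topology gH T2 -> continuous_top T2 tau p ->
          exists f : H -> H,
            group_hom gH gH f /\ bijective f /\
            continuous_top T1 T2 f /\
            (forall m, f (i m) = i m) /\
            (forall h, p (f h) = p h))).
Proof.
split; split.
-
  move=> surj H gH i p Hext.
  pose s0 g := epsilon (inhabits (gone gH)) (fun h => p h = g).
  have Hs0 : forall g, p (s0 g) = g.
    by move=> g; apply: (epsilon_spec (inhabits (gone gH)) (fun h => p h = g)); apply: (p_surj Hext).
  have [f' [cf' [cocf' [c Ec]]]] := surj _ (fs_cocycle Hmod Hext Hs0).
  pose s g := gmul gH (i (- c g)) (s0 g).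
  have Hs : forall g, p (s g) = g by move=> g; rewrite /s (p_imul Hext) Hs0.
  have Efs : forall g h, fs gH i p s g h = f' g h.
    move=> g h; rewrite (fs_change Hext Hs Hs0 g h).
    have -> : (fun g => ecoord gH i p s0 (s g)) = (fun g => - c g).
      by apply: functional_extensionality => x; rewrite /s (coord_imul Hext Hs0) (coord_s Hext Hs0) addr0.
    rewrite /coboundary1 (actN Hmod); apply: H8.
    exact: Ec.
  have Hf : continuous_2cochain tau (fs gH i p s).
    have -> : fs gH i p s = f' by apply: functional_extensionality => g; apply: functional_extensionality => h; apply: Efs.
    exact: cf'.
  exists (Ts tau gH i s); split; first exact: (Ts_profinite Htau Hmod Hcont Hext Hs Hf).
  exact: (Ts_quot tau Hext Hs).
-
  move=> hyp f cocf.
  have Hext := text Hmod cocf.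
  have [T [HT Hq]] := hyp _ _ _ _ Hext.
  have Hpc : continuous_top T tau snd by move=> V oV; apply: (proj2 (Hq V) oV).
  have [s [Hs Hsc]] := exists_section Htau Hext HT Hpc.
  exists (fs (tgroup Hmod cocf) (ti gG f) snd s).
  split; first exact: (fs_cont_T Htau Hext HT Hpc Hs Hsc).
  split; first exact: (fs_cocycle Hmod Hext Hs).
  exists (fun g => - ecoord (tgroup Hmod cocf) (ti gG f) snd (@ts0 G M) (s g)) => g h.
  rewrite (fs_change Hext Hs (@ts0_sec G M) g h) (fs_ts0 Hmod cocf) /coboundary1 !(actN Hmod).
  exact: H9.
-
  move=> inj H gH i p Hext _ T1 T2 HT1 Hp1 HT2 Hp2.
  have [s1 [Hs1 Hsc1]] := exists_section Htau Hext HT1 Hp1.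
  have [s2 [Hs2 Hsc2]] := exists_section Htau Hext HT2 Hp2.
  have cf1 := fs_cont_T Htau Hext HT1 Hp1 Hs1 Hsc1.
  have cf2 := fs_cont_T Htau Hext HT2 Hp2 Hs2 Hsc2.
  have ab : is_abs_2coboundary gG act (fun g h => fs gH i p s1 g h - fs gH i p s2 g h).
    exists (fun g => ecoord gH i p s2 (s1 g)) => g h.
    by rewrite (fs_change Hext Hs1 Hs2 g h) addrC addKr.
  have [c' [cc' Ec']] := inj _ _ cf1 (fs_cocycle Hmod Hext Hs1) cf2 (fs_cocycle Hmod Hext Hs2) ab.
  pose F h := gmul gH (i (ecoord gH i p s1 h + c' (p h))) (s2 (p h)).
  pose F' h := gmul gH (i (ecoord gH i p s2 h - c' (p h))) (s1 (p h)).
  have pF : forall h, p (F h) = p h by move=> h; rewrite /F (p_is Hext Hs2).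
  have pF' : forall h, p (F' h) = p h by move=> h; rewrite /F' (p_is Hext Hs1).
  have eF : forall h, ecoord gH i p s2 (F h) = ecoord gH i p s1 h + c' (p h).
    by move=> h; rewrite /F (coord_is Hext Hs2).
  have eF' : forall h, ecoord gH i p s1 (F' h) = ecoord gH i p s2 h - c' (p h).
    by move=> h; rewrite /F' (coord_is Hext Hs1).
  have Fdef : forall h, F h = gmul gH (i (ecoord gH i p s1 h + c' (p h))) (s2 (p h)) by [].
  clearbody F F'.
  exists F; split.
    move=> x y; apply: (decomp_eq Hext Hs2).
      by rewrite pF !(pM Hext) !pF.
    rewrite eF (coord_mul Hext Hs2) !eF !pF (coord_mul Hext Hs1) (pM Hext) (actD Hmod).
    by apply: H10; apply: Ec'.
  split.
    exists F' => h.
      apply: (decomp_eq Hext Hs1); first by rewrite pF' pF.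
      by rewrite eF' pF eF addrK.
    apply: (decomp_eq Hext Hs2); first by rewrite pF pF'.
    by rewrite eF pF' eF' subrK.
  split.
    move=> W oW.
    have oWs := proj1 (T_Ts Hext HT2 Hp2 Hs2 Hsc2 W) oW.
    have -> : F = (fun h => gmul gH (i (ecoord gH i p s1 h + c' (p h))) (s2 (p h))).
      by apply: functional_extensionality.
    have hT1 : is_topology T1 by case: HT1 => -[].
    apply: (Ts_cont_form (phi := fun h => ecoord gH i p s1 h + c' (p h)) (psi := p) hT1 _ Hp1 oWs).
    apply: lc_add => //; first exact: (ecoord_lc_T Hext HT1 Hp1 Hs1 Hsc1).
    exact: (lc_comp Hp1 cc').
  split => //.
  move=> m; apply: (decomp_eq Hext Hs2); first by rewrite pF.
  have ei : forall s (Hs : forall g, p (s g) = g),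
      ecoord gH i p s (i m) = m - fs gH i p s (gone gG) (gone gG).
    move=> s Hs; rewrite -{1}(Gmulg1r gH (i m)) (coord_imul Hext Hs) (coord1 Hext Hs).
    by [].
  rewrite eF (p_i Hext) (ei s1 Hs1) (ei s2 Hs2).
  apply: H11; have := Ec' (gone gG) (gone gG).
  by rewrite /coboundary1 (act1 Hmod) gmul1.
-
  move=> hyp f1 f2 cf1 coc1 cf2 coc2 [c Ec].
  pose tg := tgroup Hmod coc1.
  have Hext : is_extension gG act tg (ti gG f1) snd := text Hmod coc1.
  have Hts0 := @ts0_sec G M.
  pose s' g := gmul tg (ti gG f1 (- c g)) (ts0 M g).
  have Hs' : forall g, snd (s' g) = g by move=> g; rewrite /s' (p_imul Hext).
  have Efs' : forall g h, fs tg (ti gG f1) snd s' g h = f2 g h.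
    move=> g h; rewrite (fs_change Hext Hs' Hts0 g h) (fs_ts0 Hmod coc1).
    have -> : (fun g => ecoord tg (ti gG f1) snd (@ts0 G M) (s' g)) = (fun g => - c g).
      by apply: functional_extensionality => x; rewrite /s' (coord_imul Hext Hts0) (coord_s Hext Hts0) addr0.
    rewrite /coboundary1 (actN Hmod); apply: H8.
    exact: Ec.
  have cf0 : continuous_2cochain tau (fs tg (ti gG f1) snd (@ts0 G M)).
    have -> : fs tg (ti gG f1) snd (@ts0 G M) = f1.
      by apply: functional_extensionality => g; apply: functional_extensionality => h; apply: (fs_ts0 Hmod coc1).
    exact: cf1.
  have cf' : continuous_2cochain tau (fs tg (ti gG f1) snd s').
    have -> : fs tg (ti gG f1) snd s' = f2.
      by apply: functional_extensionality => g; apply: functional_extensionality => h; apply: Efs'.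
    exact: cf2.
  have HT1 := Ts_profinite Htau Hmod Hcont Hext Hts0 cf0.
  have HT2 := Ts_profinite Htau Hmod Hcont Hext Hs' cf'.
  have Hp1 : continuous_top (Ts tau tg (ti gG f1) (@ts0 G M)) tau snd.
    by move=> V oV; apply: (proj2 (Ts_quot tau Hext Hts0 V) oV).
  have Hp2 : continuous_top (Ts tau tg (ti gG f1) s') tau snd.
    by move=> V oV; apply: (proj2 (Ts_quot tau Hext Hs' V) oV).
  have [F [Fhom [Fbij [Fc [Fi Fp]]]]] :=
    hyp _ tg (ti gG f1) snd Hext (ex_intro _ _ (conj HT1 Hp1)) _ _ HT1 Hp1 HT2 Hp2.
  pose d g := ecoord tg (ti gG f1) snd s' (F (ts0 M g)).
  exists d; split.
    move=> m.
    have cs0 : continuous_top tau (Ts tau tg (ti gG f1) (@ts0 G M)) (@ts0 G M).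
      move=> V oV; have := @cont_is G gG tau M Htau (M * G) tg (ti gG f1) (@ts0 G M) 0 V oV.
      by apply: op_ext => g; rewrite (i0 Hext) gmul1.
    have hT := tau_top Htau.
    exact: (lc_comp (cont_comp cs0 Fc) (coord_lc_Ts Htau Hext Hs') m).
  move=> g h.
  have E1 : ecoord tg (ti gG f1) snd s' (F (gmul tg (ts0 M g) (ts0 M h))) = f1 g h + d (gmul gG g h).
    rewrite (fs_spec Hext Hts0 g h) Fhom Fi (coord_imul Hext Hs') (fs_ts0 Hmod coc1).
    by [].
  have E2 : ecoord tg (ti gG f1) snd s' (F (gmul tg (ts0 M g) (ts0 M h))) =
      d g + act g (d h) + f2 g h.
    by rewrite Fhom (coord_mul Hext Hs') !Fp /= Efs'.
  apply: H12; by rewrite -E1 E2.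
Qed.
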